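(* Let $R_1,R_2$ be discrete valuation domains with maximal ideals $P_1=R_1p_1$ and $P_2=R_2p_2$, let $\overline{R}$ be a field and $\mathcal{V}_i:R_i\to\overline{R}$ ($i=1,2$) surjective ring homomorphisms with $\ker\mathcal{V}_i=P_i$, and let $R=\{(r_1,r_2)\in R_1\times R_2:\mathcal{V}_1(r_1)=\mathcal{V}_2(r_2)\}$ be the pullback ring. Then every non-zero indecomposable separated pseudo-absorbing primary multiplication $R$-module is isomorphic to one of the following $R$-modules: (1) $R$; (2) $(R_1/P_1^n\to\overline{R}\leftarrow R_2/P_2^m)$; (3) $(R_1\to\overline{R}\leftarrow R_2/P_2^m)$; (4) $(R_1/P_1^n\to\overline{R}\leftarrow R_2)$; where $m,n\geq 1$ are integers.
   Context: $R$ is a commutative local ring with maximal ideal $P=P_1\oplus P_2=\{(a,b):a\in P_1,b\in P_2\}$. For integers $n,m\ge1$ write $P_1^n\oplus 0=\{(a,0):a\in P_1^n\}$, $0\oplus P_2^m=\{(0,b):b\in P_2^m\}$, $P_1^n\oplus P_2^m=\{(a,b):a\in P_1^n,b\in P_2^m\}$; these are ideals of $R$. For an $R$-module $S$, $P_1S$ means $(P_1\oplus 0)S$ and $P_2S$ means $(0\oplus P_2)S$. An $R$-module $S$ is separated if $P_1S\cap P_2S=0$. For an $R_1$-module $A$ and an $R_2$-module $B$ together with surjections $g:A\to\overline{R}$, $h:B\to\overline{R}$ (here always the natural maps induced by $\mathcal{V}_1$, $\mathcal{V}_2$ on $R_1$, $R_1/P_1^n$, $R_2$, $R_2/P_2^m$),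 the notation $(A\to\overline{R}\leftarrow B)$ denotes the $R$-module $\{(a,b)\in A\oplus B: g(a)=h(b)\}$ with $(r_1,r_2)(a,b)=(r_1a,r_2b)$. A proper ideal $I$ of a commutative ring is 2-absorbing primary if whenever $abc\in I$ then $ab\in I$ or $ac\in\sqrt I$ or $bc\in\sqrt I$. A proper submodule $N$ of an $R$-module $M$ is pseudo-absorbing primary if $(N:_RM)=\{r\in R: rM\subseteq N\}$ is a 2-absorbing primary ideal of $R$. $M$ is a pseudo-absorbing primary multiplication module if for every pseudo-absorbing primary submodule $N$ of $M$ there is an ideal $I$ of $R$ with $N=IM$. *)

(* Defs.v *)
From HB Require Import structures.
From mathcomp Require Import all_boot all_algebra.

Set Implicit Arguments.
Unset Strict Implicit.
Unset Printing Implicit Defensive.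

Import GRing.Theory.
Local Open Scope ring_scope.

Definition rdvd {R : comNzRingType} (a b : R) : Prop := exists c : R, b = c * a.

(* A discrete valuation domain with uniformizer p (so its maximal ideal
   is P = R p): p is a nonzero nonunit and every nonzero element is a
   unit times a power of p.                                            *)
Definition DVR_with_uniformizer (R : idomainType) (p : R) : Prop :=
  [/\ p != 0, p \isn't a GRing.unit &
      forall r : R, r != 0 ->
        exists (u : R) (k : nat), u \is a GRing.unit /\ r = u * p ^+ k].

Section Pullback.
Variables (R1 R2 : comNzRingType) (F : fieldType)
  (V1 : {rmorphism R1 -> F}) (V2 : {rmorphism R2 -> F}).

Definition pb_pred : {pred R1 * R2} := [pred x | V1 x.1 == V2 x.2].

Lemma pb_subring_closed : subring_closed pb_pred.
Proof.
split.
- by rewrite inE /= !rmorph1.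
- move=> x y; rewrite !inE /= => /eqP h1 /eqP h2.
  by rewrite !rmorphB h1 h2.
- move=> x y; rewrite !inE /= => /eqP h1 /eqP h2.
  by rewrite !rmorphM h1 h2.
Qed.

HB.instance Definition _ := GRing.isSubringClosed.Build _ pb_pred
  pb_subring_closed.

Record pullback := Pullback { pbval : R1 * R2; _ : pbval \in pb_pred }.
HB.instance Definition _ := [isSub for pbval].
HB.instance Definition _ := [Choice of pullback by <:].
HB.instance Definition _ := [SubChoice_isSubComNzRing of pullback by <:].

End Pullback.

Section ModuleNotions.
Variables (R : comNzRingType) (M : lmodType R).

Definition is_ideal (I : R -> Prop) : Prop :=
  [/\ I 0, (forall a b, I a -> I b -> I (a + b)) &
      (forall r a, I a -> I (r * a))].

Definition is_submodule (N : M -> Prop) : Prop :=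
  [/\ N 0, (forall x y, N x -> N y -> N (x + y)) &
      (forall (r : R) x, N x -> N (r *: x))].

Definition proper_ideal (I : R -> Prop) : Prop := is_ideal I /\ ~ I 1.

Definition proper_submodule (N : M -> Prop) : Prop :=
  is_submodule N /\ exists x, ~ N x.

Definition rad (I : R -> Prop) : R -> Prop := fun r => exists n : nat, I (r ^+ n).

Definition two_absorbing_primary (I : R -> Prop) : Prop :=
  proper_ideal I /\
  forall a b c : R, I (a * b * c) -> [\/ I (a * b), rad I (a * c) | rad I (b * c)].

Definition colon (N : M -> Prop) : R -> Prop := fun r => forall x : M, N (r *: x).

Definition pseudo_absorbing_primary (N : M -> Prop) : Prop :=
  proper_submodule N /\ two_absorbing_primary (colon N).

Definition ideal_mul (I : R -> Prop) : M -> Prop :=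
  fun x => exists s : seq (R * M),
    (forall q, q \in s -> I q.1) /\ x = \sum_(q <- s) q.1 *: q.2.

Definition pap_multiplication_module : Prop :=
  forall N : M -> Prop, pseudo_absorbing_primary N ->
    exists I : R -> Prop, is_ideal I /\ forall x, N x <-> ideal_mul I x.

Definition nonzero_module : Prop := exists x : M, x <> 0.

Definition indecomposable : Prop :=
  nonzero_module /\
  forall A B : M -> Prop, is_submodule A -> is_submodule B ->
    (forall x, A x -> B x -> x = 0) ->
    (forall x, exists a b, [/\ A a, B b & x = a + b]) ->
    (forall x, A x -> x = 0) \/ (forall x, B x -> x = 0).

End ModuleNotions.

Section PullbackModules.
Variables (R1 R2 : idomainType) (F : fieldType) (p1 : R1) (p2 : R2)
  (V1 : {rmorphism R1 -> F}) (V2 : {rmorphism R2 -> F}).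

Local Notation R := (pullback V1 V2).

Definition P1_0 : R -> Prop := fun r => rdvd p1 (pbval r).1 /\ (pbval r).2 = 0.
Definition O_P2 : R -> Prop := fun r => (pbval r).1 = 0 /\ rdvd p2 (pbval r).2.

Definition separated (M : lmodType R) : Prop :=
  forall x : M, ideal_mul P1_0 x -> ideal_mul O_P2 x -> x = 0.

(* Congruence on R_i describing the component A of (A -> Rbar <- B):
   None   : A = R_i      (equality)
   Some n : A = R_i/P_i^n (congruence modulo p_i^n)                   *)
Definition congr_opt (S : idomainType) (p : S) (k : option nat) (a b : S) : Prop :=
  match k with
  | None => a = b
  | Some n => rdvd (p ^+ n) (a - b)
  end.

(* M is isomorphic to the R-module (A -> Rbar <- B), where A, B are given
   by kn, km as above.  Every element of (A -> Rbar <- B) is a pair of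
   classes (abar, bbar) whose representatives (a, b) satisfy
   V1 a = V2 b, i.e. (a,b) is an element of R; two representatives give
   the same element iff they are componentwise congruent, and the
   R-action (r1,r2)(a,b) = (r1 a, r2 b) is the product of R.  Thus an
   isomorphism (A -> Rbar <- B) ~= M is exactly an additive, R-linear,
   surjective psi : R -> M whose fibres are the congruence classes.     *)
Definition iso_to_pb (kn km : option nat) (M : lmodType R) : Prop :=
  exists psi : R -> M,
    [/\ (forall x y : R, psi (x + y) = psi x + psi y),
        (forall r x : R, psi (r * x) = r *: psi x),
        (forall m : M, exists x : R, psi x = m) &
        (forall x y : R, psi x = psi y <->
           (congr_opt p1 kn (pbval x).1 (pbval y).1 /\
            congr_opt p2 km (pbval x).2 (pbval y).2))].

End PullbackModules.

(* Main.v *)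
Require Import Defs.
From HB Require Import structures.
From mathcomp Require Import all_boot all_algebra.
From Stdlib Require Import Classical.
Import GRing.Theory.
Local Open Scope ring_scope.

Lemma ex_min_nat (P : nat -> Prop) : (exists n, P n) ->
  exists n, P n /\ forall m, P m -> (n <= m)%N.
Proof.
move=> [n0 Pn0]; apply: NNPP => nomin.
suff H : forall n m, (m < n)%N -> ~ P m by exact: (H n0.+1 n0 (ltnSn n0)).
elim=> [//|n IH] m; rewrite ltnS leq_eqVlt => /orP[/eqP -> Pn|/IH //].
apply: nomin; exists n; split=> // m' Pm'.
by case: (leqP n m') => // /IH.
Qed.

Section DVR.
Variables (S : idomainType) (F : fieldType) (p : S) (V : {rmorphism S -> F}).
Hypothesis hS : DVR_with_uniformizer p.
Hypothesis hVk : forall x : S, V x = 0 <-> rdvd p x.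

Lemma dvr_unit (a : S) : V a != 0 -> a \is a GRing.unit.
Proof.
move=> Va; have a0 : a != 0 by apply: contraNneq Va => ->; rewrite rmorph0.
move: Va; case: hS => _ _ /(_ a a0) [u [[|k] [uU ->]]] Va; first by rewrite expr0 mulr1.
have : V (u * p ^+ k.+1) = 0 by apply/hVk; exists (u * p ^+ k); rewrite exprSr mulrA.
by move=> h; move: Va; rewrite h eqxx.
Qed.

Lemma classify (J : S -> Prop) (J0 : J 0) (Jmul : forall c a, J a -> J (c * a))
  (Jsub : forall a b, J a -> J b -> J (a - b)) (J1 : ~ J 1) :
  exists k : option nat, (if k is Some n then (0 < n)%N else True) /\
    forall a b, J (a - b) <-> congr_opt p k a b.
Proof.
case: (classic (exists a, a != 0 /\ J a)) => [[a0 [a00 Ja0]]|none].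
  have [u [k0 [uU ea0]]] : exists u k, u \is a GRing.unit /\ a0 = u * p ^+ k.
    by case: hS => _ _ /(_ a0 a00).
  have Jk0 : J (p ^+ k0) by rewrite -(mulKr uU (p ^+ k0)) -ea0; apply: Jmul.
  have [n [Jn nmin]] := @ex_min_nat (fun k => J (p ^+ k)) (ex_intro _ k0 Jk0).
  have key : forall c, J c <-> rdvd (p ^+ n) c.
    move=> c; split; last by move=> [d ->]; apply: Jmul.
    have [->|c0] := eqVneq c 0; first by exists 0; rewrite mul0r.
    have [w [k [wU ec]]] : exists w k, w \is a GRing.unit /\ c = w * p ^+ k.
      by case: hS => _ _ /(_ c c0).
    move=> Jc; have Jk : J (p ^+ k) by rewrite -(mulKr wU (p ^+ k)) -ec; apply: Jmul.
    have nk := nmin _ Jk.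
    by exists (w * p ^+ (k - n)); rewrite ec -mulrA -exprD subnK.
  exists (Some n); split.
    by case: n Jn {nmin key} => // Jn; exfalso; apply: J1; rewrite -(expr0 p).
  by move=> a b /=; apply: key.
exists None; split=> // a b /=; split.
  move=> Jab; apply/eqP; rewrite -subr_eq0; apply/negPn/negP => ab0.
  by apply: none; exists (a - b).
by move=> ->; rewrite subrr.
Qed.

End DVR.
Arguments dvr_unit {S F p V} hS hVk {a}.
Arguments classify {S p} hS J.

Section PB.
Variables (R1 R2 : idomainType) (F : fieldType) (p1 : R1) (p2 : R2)
  (V1 : {rmorphism R1 -> F}) (V2 : {rmorphism R2 -> F}).
Hypothesis hR1 : DVR_with_uniformizer p1.
Hypothesis hR2 : DVR_with_uniformizer p2.
Hypothesis hV1s : forall y : F, exists x : R1, V1 x = y.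
Hypothesis hV2s : forall y : F, exists x : R2, V2 x = y.
Hypothesis hV1k : forall x : R1, V1 x = 0 <-> rdvd p1 x.
Hypothesis hV2k : forall x : R2, V2 x = 0 <-> rdvd p2 x.

Local Notation R := (pullback V1 V2).
Local Notation "x .1v" := (pbval x).1 (at level 2, format "x .1v").
Local Notation "x .2v" := (pbval x).2 (at level 2, format "x .2v").

Lemma pbP (x : R) : V1 x.1v = V2 x.2v.
Proof. case: x => v h /=; exact/eqP. Qed.

Definition mk (a : R1) (b : R2) (h : V1 a = V2 b) : R :=
  @Pullback _ _ _ V1 V2 (a, b) (introT eqP h).
Arguments mk {a b} h.

Lemma mkE a b h : pbval (@mk a b h) = (a, b). Proof. by []. Qed.

Lemma vX (x : R) n : pbval (x ^+ n) = (x.1v ^+ n, x.2v ^+ n).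
Proof. elim: n => [|n IH]; first by []. by rewrite exprS /= IH !exprS. Qed.

Lemma pM (x y : R) : pbval (x * y) = (x.1v * y.1v, x.2v * y.2v). Proof. by []. Qed.
Lemma pD (x y : R) : pbval (x + y) = (x.1v + y.1v, x.2v + y.2v). Proof. by []. Qed.
Lemma pN (x : R) : pbval (- x) = (- x.1v, - x.2v). Proof. by []. Qed.
Lemma pB (x y : R) : pbval (x - y) = (x.1v - y.1v, x.2v - y.2v). Proof. by []. Qed.
Lemma p1E : pbval (1 : R) = (1, 1). Proof. by []. Qed.
Lemma p0E : pbval (0 : R) = (0, 0). Proof. by []. Qed.

Lemma pbext (x y : R) : x.1v = y.1v -> x.2v = y.2v -> x = y.
Proof.
move=> h1 h2; apply: val_inj => /=.
by move: h1 h2; case: (pbval x) => a b; case: (pbval y) => c d /= -> ->.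
Qed.

Lemma rd1 (a : R1) : rdvd p1 a -> V1 a = 0. Proof. by move/hV1k. Qed.
Lemma rd2 (a : R2) : rdvd p2 a -> V2 a = 0. Proof. by move/hV2k. Qed.

Lemma e1P : V1 p1 = V2 0.
Proof. by rewrite rmorph0; apply: rd1; exists 1; rewrite mul1r. Qed.
Lemma e2P : V1 0 = V2 p2.
Proof. by rewrite rmorph0; symmetry; apply: rd2; exists 1; rewrite mul1r. Qed.

Definition e1 : R := mk e1P.
Definition e2 : R := mk e2P.

Lemma lift1 (a : R1) : exists y : R, y.1v = a.
Proof. have [b hb] := hV2s (V1 a); by exists (mk (esym hb)). Qed.
Lemma lift2 (b : R2) : exists y : R, y.2v = b.
Proof. have [a ha] := hV1s (V2 b); by exists (mk ha). Qed.

Definition inP (r : R) := V1 r.1v = 0.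

Lemma inP2 r : inP r <-> V2 r.2v = 0.
Proof. by rewrite /inP pbP. Qed.

Lemma e1e2 : e1 * e2 = 0.
Proof. by apply: pbext => /=; rewrite ?mulr0 ?mul0r. Qed.

Lemma unit_of (r : R) : ~ inP r -> exists s : R, s * r = 1.
Proof.
move=> nP; have V1n : V1 r.1v != 0 by apply/eqP.
have V2n : V2 r.2v != 0 by rewrite -pbP.
have u1 := dvr_unit hR1 hV1k V1n; have u2 := dvr_unit hR2 hV2k V2n.
have h : V1 (r.1v)^-1 = V2 (r.2v)^-1 by rewrite !rmorphV // pbP.
by exists (mk h); apply: pbext => /=; rewrite mulVr.
Qed.

Lemma decomp (r : R) : inP r -> exists c d : R,
  [/\ pbval (c * e1) = (r.1v, 0), pbval (d * e2) = (0, r.2v) & r = c * e1 + d * e2].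
Proof.
move=> rP; have /hV1k [a ha] := rP; have /inP2/hV2k [b hb] := rP.
have [c hc] := lift1 a; have [d hd] := lift2 b.
have E1 : pbval (c * e1) = (r.1v, 0) by rewrite pM /= hc ha mulr0.
have E2 : pbval (d * e2) = (0, r.2v) by rewrite pM /= hd hb mulr0.
exists c, d; split=> //; apply: pbext; rewrite /= ?hc ?hd ?ha ?hb ?mulr0 ?addr0 ?add0r //.
Qed.


Lemma zpat {a1 b1 c1 : R1} {a2 b2 c2 : R2} :
  a1 * b1 * c1 = 0 -> a2 * b2 * c2 = 0 ->
  [\/ a1 * b1 = 0 /\ a2 * b2 = 0, a1 * c1 = 0 /\ a2 * c2 = 0
    | b1 * c1 = 0 /\ b2 * c2 = 0].
Proof.
move/eqP; rewrite !mulf_eq0 => /orP[/orP[]|] /eqP->;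
move/eqP; rewrite !mulf_eq0 => /orP[/orP[]|] /eqP->;
rewrite ?mul0r ?mulr0;
first [by apply: Or31 | by apply: Or32 | by apply: Or33].
Qed.

Lemma pb_eq0 (z : R) : z.1v = 0 -> z.2v = 0 -> z = 0.
Proof. by move=> h1 h2; apply: pbext. Qed.

Lemma tapP {A : R -> Prop} (hA : forall r, A r <-> inP r) :
  two_absorbing_primary A.
Proof.
split.
  split; first split.
  - by apply/hA; rewrite /inP rmorph0.
  - by move=> a b /hA Ha /hA Hb; apply/hA; rewrite /inP rmorphD Ha Hb addr0.
  - by move=> r a /hA Ha; apply/hA; rewrite /inP pM /= rmorphM Ha mulr0.
  - by move/hA; rewrite /inP rmorph1 => /eqP; rewrite oner_eq0.
move=> a b c /hA; rewrite /inP !pM /= !rmorphM => /eqP.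
rewrite !mulf_eq0 => /orP[/orP[]|] /eqP h.
- by apply: Or31; apply/hA; rewrite /inP pM /= rmorphM h mul0r.
- by apply: Or31; apply/hA; rewrite /inP pM /= rmorphM h mulr0.
- by apply: Or32; exists 1%N; rewrite expr1; apply/hA; rewrite /inP pM /= rmorphM h mulr0.
Qed.

Lemma radQ1 (A : R -> Prop) : is_ideal A ->
  (exists z, [/\ A z, z.1v = 0 & z.2v != 0]) ->
  forall r, r.1v = 0 -> Defs.rad A r.
Proof.
move=> [A0 AD AM] [z [Az z1 z2]] r r1.
have [u [k [uU ez]]] : exists u k, u \is a GRing.unit /\ z.2v = u * p2 ^+ k.
  by case: hR2 => _ _ /(_ _ z2).
have : V2 r.2v = 0 by rewrite -pbP r1 rmorph0.
move/hV2k => [w hw].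
have [t ht] := lift2 (w ^+ k.+1 * p2 * u^-1).
exists k.+1; have -> : r ^+ k.+1 = t * z; last by apply: AM.
apply: pbext; rewrite vX pM /= ?r1 ?z1 ?expr0n ?mulr0 //.
rewrite ht ez hw exprMn exprSr.
by rewrite -!mulrA; congr (_ * _); rewrite mulKr // exprS.
Qed.

Lemma radQ2 (A : R -> Prop) : is_ideal A ->
  (exists z, [/\ A z, z.2v = 0 & z.1v != 0]) ->
  forall r, r.2v = 0 -> Defs.rad A r.
Proof.
move=> [A0 AD AM] [z [Az z1 z2]] r r1.
have [u [k [uU ez]]] : exists u k, u \is a GRing.unit /\ z.1v = u * p1 ^+ k.
  by case: hR1 => _ _ /(_ _ z2).
have : V1 r.1v = 0 by rewrite pbP r1 rmorph0.
move/hV1k => [w hw].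
have [t ht] := lift1 (w ^+ k.+1 * p1 * u^-1).
exists k.+1; have -> : r ^+ k.+1 = t * z; last by apply: AM.
apply: pbext; rewrite vX pM /= ?r1 ?z1 ?expr0n ?mulr0 //.
rewrite ht ez hw exprMn exprSr.
by rewrite -!mulrA; congr (_ * _); rewrite mulKr // exprS.
Qed.

Lemma tapQ {A : R -> Prop} : is_ideal A -> ~ A 1 ->
  (forall r, A r -> r.1v = 0 \/ r.2v = 0) -> two_absorbing_primary A.
Proof.
move=> hI n1 hQ; split; first by split.
have [A0 AD AM] := hI.
have rad0 : forall y : R, y = 0 -> Defs.rad A y by move=> y ->; exists 1%N; rewrite expr1.
move=> a b c Habc; case: (hQ _ Habc) => h.
- case: (classic (exists z, [/\ A z, z.1v = 0 & z.2v != 0])) => [ex|nex].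
    have R1' := @radQ1 A hI ex.
    move: h; rewrite !pM /= => /eqP; rewrite !mulf_eq0 => /orP[/orP[]|] /eqP h.
    + by apply: Or32; apply: R1'; rewrite pM /= h mul0r.
    + by apply: Or33; apply: R1'; rewrite pM /= h mul0r.
    + by apply: Or32; apply: R1'; rewrite pM /= h mulr0.
  have h2 : (a * b * c).2v = 0.
    by apply/eqP; apply/negP => hn; apply: nex; exists (a * b * c); split => //; exact/negP.
  move: h h2; rewrite !pM /= => h h2.
  case: (zpat h h2) => [[u1 u2]|[u1 u2]|[u1 u2]].
  + by apply: Or31; have -> : a * b = 0 by apply: pb_eq0; rewrite pM.
  + by apply: Or32; apply: rad0; apply: pb_eq0; rewrite pM.
  + by apply: Or33; apply: rad0; apply: pb_eq0; rewrite pM.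
- case: (classic (exists z, [/\ A z, z.2v = 0 & z.1v != 0])) => [ex|nex].
    have R1' := @radQ2 A hI ex.
    move: h; rewrite !pM /= => /eqP; rewrite !mulf_eq0 => /orP[/orP[]|] /eqP h.
    + by apply: Or32; apply: R1'; rewrite pM /= h mul0r.
    + by apply: Or33; apply: R1'; rewrite pM /= h mul0r.
    + by apply: Or32; apply: R1'; rewrite pM /= h mulr0.
  have h2 : (a * b * c).1v = 0.
    by apply/eqP; apply/negP => hn; apply: nex; exists (a * b * c); split => //; exact/negP.
  move: h h2; rewrite !pM /= => h h2.
  case: (zpat h2 h) => [[u1 u2]|[u1 u2]|[u1 u2]].
  + by apply: Or31; have -> : a * b = 0 by apply: pb_eq0; rewrite pM.
  + by apply: Or32; apply: rad0; apply: pb_eq0; rewrite pM.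
  + by apply: Or33; apply: rad0; apply: pb_eq0; rewrite pM.
Qed.


Variable M : lmodType R.

Definition PM (m : M) := exists u v : M, m = e1 *: u + e2 *: v.

Lemma PM0 : PM 0.
Proof. by exists 0, 0; rewrite !scaler0 addr0. Qed.
Lemma PMD a b : PM a -> PM b -> PM (a + b).
Proof.
move=> [u [v ->]] [u' [v' ->]]; exists (u + u'), (v + v').
by rewrite !scalerDr addrACA.
Qed.
Lemma PMZ (r : R) a : PM a -> PM (r *: a).
Proof.
move=> [u [v ->]]; exists (r *: u), (r *: v).
by rewrite scalerDr !scalerA [r * e1]mulrC [r * e2]mulrC.
Qed.

Lemma inP_PM (r : R) (m : M) : inP r -> PM (r *: m).
Proof.
move=> /decomp [c [d [_ _ ->]]]; exists (c *: m), (d *: m).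
by rewrite scalerDl !scalerA [c * e1]mulrC [d * e2]mulrC.
Qed.

Lemma ideal_mul_ind (I : R -> Prop) (Q : M -> Prop) :
  Q 0 -> (forall a b, Q a -> Q b -> Q (a + b)) ->
  (forall r m, I r -> Q (r *: m)) -> forall y, ideal_mul I y -> Q y.
Proof.
move=> Q0 QD QZ y [s [hs ->]]; rewrite big_seq.
by apply: (big_ind Q) => // q qs; apply: QZ; apply: hs.
Qed.

Lemma ideal_mul1 {I : R -> Prop} {r : R} (m : M) : I r -> ideal_mul I (r *: m).
Proof.
by move=> Ir; exists [:: (r, m)]; split; [move=> q; rewrite inE => /eqP -> | rewrite big_seq1].
Qed.

Lemma ideal_mul_PM {I : R -> Prop} : (forall r, I r -> inP r) ->
  forall y, ideal_mul I y -> PM y.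
Proof.
move=> hI; apply: ideal_mul_ind; [exact: PM0 | exact: PMD |].
by move=> r m /hI; apply: inP_PM.
Qed.

Lemma pap_ideal {N : M -> Prop} : pap_multiplication_module M ->
  is_submodule N -> (exists x, ~ N x) -> two_absorbing_primary (colon N) ->
  exists I, (forall r, I r -> inP r) /\ forall x, N x <-> ideal_mul I x.
Proof.
move=> pap sN [x0 nx0] tap.
have [I [_ hI]] := pap N (conj (conj sN (ex_intro _ x0 nx0)) tap).
exists I; split=> // r Ir; case: (eqVneq (V1 r.1v) 0) => // /eqP hn.
exfalso; have [s hs] := @unit_of r hn; apply: nx0; apply/hI.
by rewrite -[x0]scale1r -hs mulrC -scalerA; apply: ideal_mul1.
Qed.

Lemma colon_sub {N : M -> Prop} : is_submodule N -> (exists x, ~ N x) ->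
  (forall m, exists n u v, [/\ N n & m = n + e1 *: u + e2 *: v]) ->
  forall r, colon N r -> r.1v = 0 \/ r.2v = 0.
Proof.
move=> [N0 ND NZ] [x nx] cov.
have covk : forall k m, exists n u v,
    [/\ N n & m = n + e1 ^+ k.+1 *: u + e2 ^+ k.+1 *: v].
  elim=> [|k IH] m; first by rewrite !expr1; apply: cov.
  have [n [u [v [Nn ->]]]] := IH m.
  have [n1 [u1 [v1 [Nn1 ->]]]] := cov u.
  have [n2 [u2 [v2 [Nn2 ->]]]] := cov v.
  exists (n + e1 ^+ k.+1 *: n1 + e2 ^+ k.+1 *: n2), u1, v2; split.
    exact: ND (ND _ _ Nn (NZ _ _ Nn1)) (NZ _ _ Nn2).
  rewrite !scalerDr !scalerA -!exprSr.
  have -> : e1 ^+ k.+1 * e2 = 0 by rewrite exprSr -mulrA e1e2 mulr0.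
  have -> : e2 ^+ k.+1 * e1 = 0 by rewrite exprSr -mulrA [e2 * e1]mulrC e1e2 mulr0.
  rewrite !scale0r !addr0 !addrA; congr (_ + _).
  by rewrite -!addrA; congr (_ + _); rewrite !addrA addrAC.
move=> r cr; apply: NNPP => /not_or_and [/eqP r1 /eqP r2].
have [u1 [k [u1U e1r]]] : exists u k, u \is a GRing.unit /\ r.1v = u * p1 ^+ k.
  by case: hR1 => _ _ /(_ _ r1).
have [u2 [l [u2U e2r]]] : exists u k, u \is a GRing.unit /\ r.2v = u * p2 ^+ k.
  by case: hR2 => _ _ /(_ _ r2).
have hc : V1 (u1^-1 * p1 ^+ l.+1) = V2 0.
  by rewrite rmorph0; apply: rd1; exists (u1^-1 * p1 ^+ l); rewrite exprSr mulrA.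
have hd : V1 0 = V2 (u2^-1 * p2 ^+ k.+1).
  by rewrite rmorph0; symmetry; apply: rd2; exists (u2^-1 * p2 ^+ k); rewrite exprSr mulrA.
have E1 : e1 ^+ (k + l).+1 = r * mk hc.
  apply: pbext; rewrite vX pM /= ?expr0n ?mulr0 //.
  by rewrite e1r mulrACA mulrV // mul1r -exprD addnS.
have E2 : e2 ^+ (k + l).+1 = r * mk hd.
  apply: pbext; rewrite vX pM /= ?expr0n ?mulr0 //.
  by rewrite e2r mulrACA mulrV // mul1r -exprD addnS addnC.
apply: nx; have [n [u [v [Nn ->]]]] := covk (k + l)%N x.
rewrite E1 E2 -!scalerA -addrA -scalerDr; exact: ND _ _ Nn (cr _).
Qed.


Lemma colon_ideal {N : M -> Prop} : is_submodule N -> is_ideal (colon N).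
Proof.
move=> [N0 ND NZ]; split.
- by move=> m; rewrite scale0r.
- by move=> a b ha hb m; rewrite scalerDl; apply: ND.
- by move=> r a ha m; rewrite -scalerA; apply: NZ.
Qed.

Lemma colon_proper {N : M -> Prop} : (exists x, ~ N x) -> ~ colon N 1.
Proof. by move=> [x nx] h; apply: nx; rewrite -[x]scale1r. Qed.

Lemma subR (x : M) : is_submodule (fun m => exists r : R, m = r *: x).
Proof.
split.
- by exists 0; rewrite scale0r.
- by move=> a b [r ->] [s ->]; exists (r + s); rewrite scalerDl.
- by move=> r a [s ->]; exists (r * s); rewrite scalerA.
Qed.

Lemma inP0 : inP 0. Proof. by rewrite /inP rmorph0. Qed.

Lemma fix_zero (x : M) (p : R) : inP p -> x = p *: x -> x = 0.
Proof.
move=> hp hx.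
have h0 : (1 - p) *: x = 0 by rewrite scalerBl scale1r -hx subrr.
have np : ~ inP (1 - p).
  rewrite /inP pB /= rmorphB rmorph1 hp subr0 => /eqP; by rewrite oner_eq0.
have [s hs] := @unit_of (1 - p) np.
by rewrite -[x]scale1r -hs -scalerA h0 scaler0.
Qed.

Lemma PMall_case {x : M} {I : R -> Prop} : (forall m, PM m) ->
  (forall y, ideal_mul I y -> exists r : R, y = r *: x) ->
  forall y, ideal_mul I y -> exists p, inP p /\ y = p *: x.
Proof.
move=> allP hIx; apply: ideal_mul_ind.
- by exists 0; rewrite scale0r; split=> //; exact: inP0.
- move=> a b [p [hp ->]] [q [hq ->]]; exists (p + q); split; last by rewrite scalerDl.
  by rewrite /inP pD /= rmorphD hp hq addr0.
- move=> r m Ir; have [u [v ->]] := allP m.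
  have [t ht] := hIx _ (ideal_mul1 u Ir).
  have [t' ht'] := hIx _ (ideal_mul1 v Ir).
  exists (e1 * t + e2 * t'); split.
    rewrite /inP pD !pM /= mul0r addr0 rmorphM.
    by rewrite e1P rmorph0 mul0r.
  rewrite scalerDr !scalerA [r * e1]mulrC [r * e2]mulrC -!scalerA ht ht'.
  by rewrite !scalerA scalerDl.
Qed.

Lemma cyclic : pap_multiplication_module M -> nonzero_module M ->
  exists x : M, x <> 0 /\ forall m, exists r : R, m = r *: x.
Proof.
move=> pap nz.
case: (classic (forall m, PM m)) => [allP|].
  have [x xn] := nz.
  case: (classic (forall m, exists r : R, m = r *: x)) => [gen|ngen].
    by exists x.
  exfalso; have sN := subR x.
  have prop : exists m, ~ (exists r : R, m = r *: x) by apply: not_all_ex_not.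
  have cov : forall m, exists n u v, [/\ (exists r : R, n = r *: x) &
      m = n + e1 *: u + e2 *: v].
    move=> m; have [u [v ->]] := allP m.
    by exists 0, u, v; split; [exists 0; rewrite scale0r | rewrite add0r].
  have tap := tapQ (colon_ideal sN) (colon_proper prop) (colon_sub sN prop cov).
  have [I [IP hI]] := pap_ideal pap sN prop tap.
  have [p [hp hx]] := PMall_case allP (fun y hy => proj2 (hI y) hy) x
      (proj1 (hI x) (ex_intro _ 1 (esym (scale1r x)))).
  by apply: xn; exact: fix_zero hp hx.
move/not_all_ex_not => [x0 nx0].
pose N0 := fun m : M => exists r : R, exists2 n, PM n & m = r *: x0 + n.
have sN0 : is_submodule N0.
  split.
  - by exists 0, 0; [exact: PM0 | rewrite scale0r addr0].
  - move=> a b [r [n hn ->]] [s [n' hn' ->]]; exists (r + s), (n + n').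
      exact: PMD.
    by rewrite scalerDl addrACA.
  - move=> r a [s [n hn ->]]; exists (r * s), (r *: n); first exact: PMZ.
    by rewrite scalerDr scalerA.
have allN0 : forall m, N0 m.
  apply: NNPP => /not_all_ex_not prop.
  have tap : two_absorbing_primary (colon N0).
    apply: tapP => r; split.
      move=> cr; case: (eqVneq (V1 r.1v) 0) => // /eqP hn.
      have [s hs] := @unit_of r hn; exfalso; have [m nm] := prop; apply: nm.
      by rewrite -[m]scale1r -hs mulrC -scalerA; apply: cr.
    by move=> hr m; exists 0, (r *: m); [exact: inP_PM | rewrite scale0r add0r].
  have [I [IP hI]] := pap_ideal pap sN0 prop tap.
  apply: nx0; apply: ideal_mul_PM IP _ _; apply/hI.
  by exists 1, 0; [exact: PM0 | rewrite scale1r addr0].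
case: (classic (forall m, exists r : R, m = r *: x0)) => [gen|ngen].
  by exists x0; split=> // h0; apply: nx0; rewrite h0; exact: PM0.
exfalso; have sN := subR x0.
have prop : exists m, ~ (exists r : R, m = r *: x0) by apply: not_all_ex_not.
have cov : forall m, exists n u v, [/\ (exists r : R, n = r *: x0) &
    m = n + e1 *: u + e2 *: v].
  move=> m; have [r [n [u [v ->]] ->]] := allN0 m.
  by exists (r *: x0), u, v; split; [exists r | rewrite addrA].
have tap := tapQ (colon_ideal sN) (colon_proper prop) (colon_sub sN prop cov).
have [I [IP hI]] := pap_ideal pap sN prop tap.
apply: nx0; apply: ideal_mul_PM IP _ _; apply/hI.
by exists 1; rewrite scale1r.
Qed.


Lemma classify_ann (x : M) : x <> 0 -> separated p1 p2 M ->
  exists k1 k2,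
    [/\ (if k1 is Some n then (0 < n)%N else True),
        (if k2 is Some n then (0 < n)%N else True) &
        forall a b : R, a *: x = b *: x <->
          (congr_opt p1 k1 a.1v b.1v /\ congr_opt p2 k2 a.2v b.2v)].
Proof.
move=> xn sep.
pose J1 := fun a : R1 => exists y : R, pbval y = (a, 0) /\ y *: x = 0.
pose J2 := fun b : R2 => exists y : R, pbval y = (0, b) /\ y *: x = 0.
have ann : forall r : R, r *: x = 0 <-> J1 r.1v /\ J2 r.2v.
  move=> r; split.
    move=> rx.
    have rP : inP r.
      case: (eqVneq (V1 r.1v) 0) => // /eqP hn; exfalso.
      have [s hs] := @unit_of r hn; apply: xn.
      by rewrite -[x]scale1r -hs -scalerA rx scaler0.
    have [c [d [E1 E2 Er]]] := @decomp r rP.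
    have sum0 : (c * e1) *: x + (d * e2) *: x = 0 by rewrite -scalerDl -Er.
    have c0 : (c * e1) *: x = 0.
      apply: sep.
        apply: ideal_mul1; rewrite /P1_0 E1 /=; split=> //; exact/hV1k.
      move/eqP: sum0; rewrite addr_eq0 => /eqP ->; rewrite -scaleNr.
      apply: ideal_mul1; rewrite /O_P2 pN E2 /= oppr0; split=> //.
      have /inP2/hV2k [w hw] := rP; by exists (- w); rewrite hw mulNr.
    split; first by exists (c * e1).
    by exists (d * e2); split=> //; move: sum0; rewrite c0 add0r.
  move=> [[y [Ey yx]] [z [Ez zx]]].
  have -> : r = y + z by apply: pbext; rewrite pD Ey Ez /= ?addr0 ?add0r.
  by rewrite scalerDl yx zx addr0.
have J1_0 : J1 0 by exists 0; rewrite scale0r.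
have J2_0 : J2 0 by exists 0; rewrite scale0r.
have J1M : forall c a, J1 a -> J1 (c * a).
  move=> c a [y [Ey yx]]; have [t ht] := lift1 c.
  exists (t * y); rewrite pM Ey /= ht mulr0 -scalerA yx scaler0; by [].
have J2M : forall c a, J2 a -> J2 (c * a).
  move=> c a [y [Ey yx]]; have [t ht] := lift2 c.
  exists (t * y); rewrite pM Ey /= ht mulr0 -scalerA yx scaler0; by [].
have J1B : forall a b, J1 a -> J1 b -> J1 (a - b).
  move=> a b [y [Ey yx]] [z [Ez zx]]; exists (y - z).
  by rewrite pB Ey Ez /= subr0 scalerBl yx zx subr0.
have J2B : forall a b, J2 a -> J2 b -> J2 (a - b).
  move=> a b [y [Ey yx]] [z [Ez zx]]; exists (y - z).
  by rewrite pB Ey Ez /= subr0 scalerBl yx zx subr0.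
have J1n : ~ J1 1.
  move=> [y [Ey _]]; have := pbP y; rewrite Ey /= rmorph1 rmorph0 => /eqP.
  by rewrite oner_eq0.
have J2n : ~ J2 1.
  move=> [y [Ey _]]; have := pbP y; rewrite Ey /= rmorph1 rmorph0 => /eqP.
  by rewrite eq_sym oner_eq0.
have [k1 [hk1 ek1]] := classify hR1 J1 J1_0 J1M J1B J1n.
have [k2 [hk2 ek2]] := classify hR2 J2 J2_0 J2M J2B J2n.
exists k1, k2; split=> // a b.
have e : a *: x = b *: x <-> (a - b) *: x = 0.
  rewrite scalerBl; split => [->|/eqP]; first by rewrite subrr.
  by rewrite subr_eq0 => /eqP.
split.
  by move/e/ann; rewrite pB /= => -[/ek1 h1 /ek2 h2].
by move=> [/ek1 h1 /ek2 h2]; apply/e/ann; rewrite pB.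
Qed.

End PB.

Theorem theorem3p4
  (R1 R2 : idomainType) (Rbar : fieldType) (p1 : R1) (p2 : R2)
  (V1 : {rmorphism R1 -> Rbar}) (V2 : {rmorphism R2 -> Rbar})
  (hR1 : DVR_with_uniformizer p1) (hR2 : DVR_with_uniformizer p2)
  (hV1s : forall y : Rbar, exists x : R1, V1 x = y)
  (hV2s : forall y : Rbar, exists x : R2, V2 x = y)
  (hV1k : forall x : R1, V1 x = 0 <-> rdvd p1 x)
  (hV2k : forall x : R2, V2 x = 0 <-> rdvd p2 x)
  (M : lmodType (pullback V1 V2)) :
  indecomposable M -> separated p1 p2 M -> pap_multiplication_module M ->
  [\/ iso_to_pb p1 p2 None None M,
      (exists n m : nat, [/\ (0 < n)%N, (0 < m)%N &
                            iso_to_pb p1 p2 (Some n) (Some m) M]),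
      (exists m : nat, (0 < m)%N /\ iso_to_pb p1 p2 None (Some m) M)
    | (exists n : nat, (0 < n)%N /\ iso_to_pb p1 p2 (Some n) None M)].
Proof.
move=> [nz _] sep pap.
have [x [xn gen]] := @cyclic _ _ _ _ _ _ _ hR1 hR2 hV1s hV2s hV1k hV2k M pap nz.
have [k1 [k2 [hk1 hk2 ek]]] := @classify_ann _ _ _ _ _ _ _ hR1 hR2 hV1s hV2s hV1k hV2k _ _ xn sep.
have iso : iso_to_pb p1 p2 k1 k2 M.
  exists (fun r => r *: x); split.
  - by move=> a b; rewrite scalerDl.
  - by move=> r a; rewrite scalerA.
  - by move=> m; have [r ->] := gen m; exists r.
  - exact: ek.
clear ek; case: k1 hk1 iso => [n|] hn; case: k2 hk2 => [m|] hm iso.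
- by apply: Or42; exists n, m.
- by apply: Or44; exists n.
- by apply: Or43; exists m.
- by apply: Or41.
Qed.
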